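(* Let $P$ be an $n$-element poset, $L$ a labeling of $P$, $x_0\in P$, $\tilde P=P\setminus\{x_0\}$ with the induced order, and $\tilde L=\mathrm{st}(L|_{\tilde P})$. Let $\gamma\ge0$ and suppose $x_0$ is not in the promotion chain of $L_\alpha$ for any $\alpha\in\{0,\ldots,\gamma-1\}$. Then $\mathrm{st}(L_\gamma|_{\tilde P})=\tilde\partial^{\gamma}(\tilde L)$, where $\tilde\partial$ denotes promotion on labelings of the $(n-1)$-element poset $\tilde P$.
   Context: A labeling of an $m$-element poset is a bijection to $[m]$. Promotion $\partial$ on an $m$-element poset: for non-maximal $y$, the $L$-successor of $y$ is the element greater than $y$ with minimal label; the promotion chain is $v_1=L^{-1}(1)$, $v_{i+1}$ the $L$-successor of $v_i$, ending at the first maximal $v_p$; $\partial(L)(y)=L(y)-1$ off the chain, $\partial(L)(v_i)=L(v_{i+1})-1$ for $i<p$, $\partial(L)(v_p)=m$. $L_\gamma=\partial^\gamma(L)$. For an injective $f:Y\to\mathbb Z$ on an $m$-element set, the standardization $\mathrm{st}(f)$ is the unique bijection $g:Y\to[m]$ with $g(y)<g(y')$ iff $f(y)<f(y')$. *)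

(* Defs.v *)
(* Promotion is defined for labelings of an arbitrary subset S of the
   poset, with the induced order; a labeling L : T -> nat of S is a bijection
   from S onto [1, #|S|] (values outside S are irrelevant). *)
From mathcomp Require Import all_boot all_order.
Set Implicit Arguments. Unset Strict Implicit. Unset Printing Implicit Defensive.
Import Order.TTheory.
Local Open Scope order_scope.

Section Promotion.
Variables (disp : Order.disp_t) (T : finPOrderType disp).

Definition is_labeling (S : {set T}) (L : T -> nat) : Prop :=
  {in S &, injective L} /\ (forall y, y \in S -> 1 <= L y <= #|S|)%N.

Definition succ (S : {set T}) (L : T -> nat) (y : T) : option T :=
  [pick z in S | (y < z) && [forall w in S, (y < w) ==> (L z <= L w)%N]].

Fixpoint chain_from (S : {set T}) (L : T -> nat) (fuel : nat) (y : T) : seq T :=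
  y :: match fuel with
       | 0 => [::]
       | k.+1 => match succ S L y with
                 | Some z => chain_from S L k z
                 | None => [::]
                 end
       end.

Definition promo_chain (S : {set T}) (L : T -> nat) : seq T :=
  match [pick v in S | L v == 1%N] with
  | Some v => chain_from S L #|S| v
  | None => [::]
  end.

Definition promotion (S : {set T}) (L : T -> nat) : T -> nat :=
  fun y =>
    let c := promo_chain S L in
    if y \in c then
      let i := index y c in
      if (i.+1 < size c)%N then (L (nth y c i.+1)).-1 else #|S|
    else (L y).-1.

Definition standardize (S : {set T}) (f : T -> nat) : T -> nat :=
  fun y => #|[set y' in S | (f y' < f y)%N]|.+1.

End Promotion.

(* Main.v *)
Require Import Defs.
From mathcomp Require Import all_boot all_order.
From mathcomp Require Import zify.
From Stdlib Require Import Lia.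
Set Implicit Arguments. Unset Strict Implicit. Unset Printing Implicit Defensive.
Import Order.TTheory.

Section Gen.
Variables (disp : Order.disp_t) (T : finPOrderType disp).
Implicit Types (S : {set T}) (L f g : T -> nat).

Lemma chain_fromE S L k y : chain_from S L k y =
  y :: match k with 0 => [::] | k'.+1 => match succ S L y with
        Some z => chain_from S L k' z | None => [::] end end.
Proof. by case: k. Qed.

Lemma succ_in S L y z : succ S L y = Some z -> z \in S /\ (y < z)%O.
Proof.
rewrite /succ; case: pickP => // z' /andP[zS /andP[yz _]] [<-]; by [].
Qed.

Lemma chain_sub S L k y : y \in S -> {subset chain_from S L k y <= S}.
Proof.
elim: k y => [|k IH] y yS x /=; rewrite inE.
  by move/eqP->.
case/orP=> [/eqP->//|].
case E: (succ S L y) => [z|] //.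
have [zS _] := succ_in E.
exact: IH.
Qed.

Lemma chain_sorted S L k y : sorted (fun a b => (a < b)%O) (chain_from S L k y).
Proof.
elim: k y => [|k IH] y //=.
case E: (succ S L y) => [z|] //.
have [_ yz] := succ_in E.
have := IH z; rewrite (chain_fromE S L k z) /= => ->.
by rewrite yz.
Qed.

Lemma chain_uniq S L k y : uniq (chain_from S L k y).
Proof.
apply: (sorted_uniq (leT := fun a b => (a < b)%O)) (chain_sorted _ _ _ _).
- by move=> a b c; apply: lt_trans.
- by move=> a; rewrite ltxx.
Qed.

Lemma chain_size S L k y : y \in S -> size (chain_from S L k y) <= #|S|.
Proof.
move=> yS; rewrite cardE; apply: uniq_leq_size; first exact: chain_uniq.
by move=> x /(chain_sub yS); rewrite mem_enum.
Qed.

Lemma chain_stable S L k y : size (chain_from S L k y) <= k ->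
  forall m, k <= m -> chain_from S L m y = chain_from S L k y.
Proof.
elim: k y => [|k IH] y //= Hs [|m] //= km.
case E: (succ S L y) => [z|] //.
rewrite E in Hs.
by rewrite IH.
Qed.

Lemma promo_chain_sub S L : {subset promo_chain S L <= S}.
Proof.
rewrite /promo_chain; case: pickP => // v /andP[vS _].
exact: chain_sub.
Qed.

Lemma promo_chain_uniq S L : uniq (promo_chain S L).
Proof.
rewrite /promo_chain; case: pickP => // v _; exact: chain_uniq.
Qed.

Lemma succ_congr S f g : {in S, f =1 g} -> forall y, succ S f y = succ S g y.
Proof.
move=> fg y; rewrite /succ; apply: eq_pick => z /=.
case zS: (z \in S) => //=.
congr (_ && _); apply: eq_forallb => w.
case wS: (w \in S) => //=.
by rewrite fg // fg.
Qed.

Lemma chain_congr S f g : {in S, f =1 g} -> forall k y,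
  chain_from S f k y = chain_from S g k y.
Proof.
move=> fg; elim=> [|k IH] y //=.
by rewrite (succ_congr fg); case: (succ S g y) => // z; rewrite IH.
Qed.

Lemma promo_chain_congr S f g : {in S, f =1 g} -> promo_chain S f = promo_chain S g.
Proof.
move=> fg; rewrite /promo_chain.
have -> : [pick v in S | f v == 1] = [pick v in S | g v == 1].
  apply: eq_pick => v /=; case vS: (v \in S) => //=; by rewrite fg.
by case: pickP => // v _; rewrite (chain_congr fg).
Qed.

Lemma promotion_congr S f g : {in S, f =1 g} ->
  {in S, promotion S f =1 promotion S g}.
Proof.
move=> fg y yS; rewrite /promotion (promo_chain_congr fg).
case: ifP => yc; last by rewrite fg.
case: ifP => // lt; rewrite fg //.
apply: promo_chain_sub (mem_nth _ lt).
Qed.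

End Gen.

Section Gen2.
Variables (disp : Order.disp_t) (T : finPOrderType disp).
Implicit Types (S : {set T}) (L f g : T -> nat).

Lemma st_lt S f z w : z \in S -> w \in S ->
  (standardize S f z < standardize S f w) = (f z < f w).
Proof.
move=> zS wS; rewrite /standardize ltnS.
case: (ltnP (f z) (f w)) => H.
  apply: proper_card; apply/properP; split.
    apply/subsetP => y; rewrite !inE => /andP[-> /= H1]; exact: ltn_trans H.
  by exists z; rewrite !inE ?zS ?ltnn ?H.
apply/negbTE; rewrite -leqNgt; apply: subset_leq_card.
apply/subsetP => y; rewrite !inE => /andP[-> /= H1]; exact: leq_trans H1 H.
Qed.

Lemma st_le S f z w : z \in S -> w \in S ->
  (standardize S f z <= standardize S f w) = (f z <= f w).
Proof. by move=> zS wS; rewrite leqNgt st_lt // -leqNgt. Qed.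

Lemma st_labeling_of S f : {in S &, injective f} -> is_labeling S (standardize S f).
Proof.
move=> inj; split.
  move=> z w zS wS E; apply/eqP; apply/negPn/negP => nzw.
  have : f z != f w by apply/negP => /eqP /inj; move/(_ zS wS)/eqP; rewrite (negbTE nzw).
  rewrite neq_ltn => /orP[] H.
    by move: H; rewrite -(st_lt f zS wS) E ltnn.
  by move: H; rewrite -(st_lt f wS zS) E ltnn.
move=> y yS; rewrite /standardize /=.
have : [set y' in S | f y' < f y] \proper S.
  apply/properP; split; first by apply/subsetP => x; rewrite inE => /andP[].
  by exists y; rewrite // inE ltnn andbF.
by move/proper_card.
Qed.

Lemma lab_perm S g : is_labeling S g -> perm_eq (map g (enum S)) (iota 1 #|S|).
Proof.
case=> inj rng.
have u : uniq (map g (enum S)).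
  rewrite map_inj_in_uniq ?enum_uniq // => a b; rewrite !mem_enum; exact: inj.
have sub : {subset map g (enum S) <= iota 1 #|S|}.
  move=> k /mapP[y]; rewrite mem_enum => /rng /andP[H1 H2] ->.
  by rewrite mem_iota H1 add1n ltnS.
have sz : size (iota 1 #|S|) <= size (map g (enum S)) by rewrite size_iota size_map -cardE.
have [_ E] := uniq_min_size u sub sz.
exact: uniq_perm u (iota_uniq _ _) E.
Qed.

Lemma lab_one S g y : is_labeling S g -> y \in S -> exists2 v, v \in S & g v = 1.
Proof.
move=> lab yS.
have : 1 \in map g (enum S).
  rewrite (perm_mem (lab_perm lab)) mem_iota /= add1n ltnS.
  by apply/card_gt0P; exists y.
by case/mapP => v; rewrite mem_enum => vS ->; exists v.
Qed.

Lemma card_count S (P : pred T) : #|[set y in S | P y]| = count P (enum S).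
Proof.
rewrite -size_filter -(card_uniqP _); last by rewrite filter_uniq ?enum_uniq.
apply: eq_card => y; rewrite !inE mem_filter mem_enum.
by rewrite andbC.
Qed.

Lemma count_iota_lt t m : 1 <= t <= m -> count (fun k => k < t) (iota 1 m) = t.-1.
Proof.
case/andP=> H1 H2.
have -> : m = t.-1 + (m - t.-1) by rewrite subnKC // (leq_trans (leq_pred t)).
rewrite iotaD count_cat.
rewrite (@eq_in_count _ _ predT); last first.
  by move=> k; rewrite mem_iota => /andP[_]; rewrite add1n prednK.
rewrite count_predT size_iota (@eq_in_count _ _ pred0); last first.
  by move=> k; rewrite mem_iota => /andP[]; rewrite add1n prednK // => /leq_gtF.
by rewrite count_pred0 addn0.
Qed.

Lemma st_labeling S g : is_labeling S g -> {in S, standardize S g =1 g}.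
Proof.
move=> lab y yS; rewrite /standardize card_count.
rewrite -(count_map g (fun k => k < g y)).
rewrite (permP (lab_perm lab)) count_iota_lt; last exact: lab.2.
by rewrite prednK //; case/andP: (lab.2 _ yS).
Qed.

Lemma st_equiv S f g : {in S &, forall a b, (f a < f b) = (g a < g b)} ->
  {in S, standardize S f =1 standardize S g}.
Proof.
move=> E y yS; rewrite /standardize; congr (_.+1); apply: eq_card => x.
rewrite !inE; case xS: (x \in S) => //=; exact: E.
Qed.

End Gen2.

Section Gen3.
Variables (disp : Order.disp_t) (T : finPOrderType disp).
Implicit Types (S : {set T}) (L f g : T -> nat).

Definition src S L y : option T :=
  let c := promo_chain S L in
  if y \in c then
    (if (index y c).+1 < size c then Some (nth y c (index y c).+1) else None)
  else Some y.

Lemma promotionE S L y : promotion S L y =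
  match src S L y with Some z => (L z).-1 | None => #|S| end.
Proof. by rewrite /promotion /src; case: ifP => //; case: ifP. Qed.

Lemma src_mem S L y z : src S L y = Some z -> z = y \/ z \in promo_chain S L.
Proof.
rewrite /src; case: ifP => _; last by case=> ->; left.
case: ifP => // lt [<-]; right; exact: mem_nth.
Qed.

Lemma promo_chain_head S L y : is_labeling S L -> y \in S ->
  exists2 v, v \in S & L v = 1 /\ exists s, promo_chain S L = v :: s.
Proof.
move=> lab yS; rewrite /promo_chain; case: pickP => [v /andP[vS /eqP Lv]|H].
  by exists v => //; split => //; rewrite chain_fromE; eexists.
have [v vS Lv] := lab_one lab yS.
by move: (H v); rewrite vS Lv.
Qed.

Lemma src_prop S L y : is_labeling S L -> y \in S ->
  match src S L y with Some z => z \in S /\ 2 <= L z | None => True end.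
Proof.
move=> lab yS.
have [v vS [Lv [s cE]]] := promo_chain_head lab yS.
have cu := promo_chain_uniq S L.
have ne1 : forall z, z \in S -> z != v -> 2 <= L z.
  move=> z zS nzv; have /andP[H1 _] := lab.2 _ zS.
  rewrite ltn_neqAle H1 andbT; apply/negP => /eqP E.
  by move: nzv; rewrite (lab.1 z v zS vS) ?eqxx // -E.
rewrite /src; case: ifP => yc; last first.
  split=> //; apply: ne1 => //; apply/negP => /eqP E; by move: yc; rewrite E cE inE eqxx.
case: ifP => // lt.
have zc := mem_nth y lt.
split; first exact: promo_chain_sub zc.
apply: ne1; first exact: promo_chain_sub zc.
have -> : v = nth y (promo_chain S L) 0 by rewrite cE.
by rewrite nth_uniq // (leq_ltn_trans _ lt).
Qed.

Lemma src_inj S L y1 y2 : src S L y1 = src S L y2 -> y1 = y2.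
Proof.
rewrite /src.
set c := promo_chain S L.
have cu : uniq c := promo_chain_uniq S L.
case c1: (y1 \in c); case c2: (y2 \in c);
  case l1: ((index y1 c).+1 < size c); case l2: ((index y2 c).+1 < size c) => //.
- case => E.
  have : index y1 c == index y2 c.
    by rewrite -eqSS -(nth_uniq y1 l1 l2 cu) E (set_nth_default y1 y2 l2).
  move/eqP => I.
  by rewrite -(nth_index y1 c1) I (set_nth_default y2) ?index_mem // nth_index.
- move=> _.
  have : index y1 c == index y2 c.
    move: l1 l2; rewrite -!index_mem in c1 c2.
    by move=> /negbT; rewrite -leqNgt => H1 /negbT; rewrite -leqNgt => H2;
      rewrite eqn_leq -ltnS (leq_trans c1 H2) -ltnS (leq_trans c2 H1).
  move/eqP => I.
  by rewrite -(nth_index y1 c1) I (set_nth_default y2) ?index_mem // nth_index.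
- case=> E; by move: c2; rewrite -E (mem_nth _ l1).
- case=> E; by move: c2; rewrite -E (mem_nth _ l1).
- case=> E; by move: c1; rewrite E (mem_nth _ l2).
- case=> E; by move: c1; rewrite E (mem_nth _ l2).
- by case.
- by case.
- by case.
- by case.
Qed.

Lemma promo_labeling S L : is_labeling S L -> is_labeling S (promotion S L).
Proof.
move=> lab; have [inj rng] := lab.
split.
  move=> y1 y2 y1S y2S; rewrite !promotionE.
  have := src_prop lab y1S; have := src_prop lab y2S.
  have := @src_inj S L y1 y2.
  case: (src S L y1) => [z1|]; case: (src S L y2) => [z2|] /= Hi.
  + move=> [z2S h2] [z1S h1] E; apply: Hi; congr Some; apply: inj => //.
    by rewrite -(prednK (leq_trans _ h1)) // -(prednK (leq_trans _ h2)) // E.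
  + move=> _ [z1S h1] E; have /andP[_ b] := rng _ z1S.
    by move: b; rewrite -(prednK (leq_trans _ h1)) // E ltnn.
  + move=> [z2S h2] _ E; have /andP[_ b] := rng _ z2S.
    by move: b; rewrite -(prednK (leq_trans _ h2)) // -E ltnn.
  + by move=> _ _ _; apply: Hi.
move=> y yS; rewrite promotionE.
have := src_prop lab yS.
case: (src S L y) => [z [zS h]|_].
  have /andP[_ b] := rng _ zS.
  apply/andP; split; lia.
by rewrite leqnn andbT; apply/card_gt0P; exists y.
Qed.

End Gen3.

Section Gen4.
Variables (disp : Order.disp_t) (T : finPOrderType disp).
Variables (x0 : T) (L : T -> nat).
Hypothesis lab : is_labeling [set: T] L.
Let S' := [set: T] :\ x0.
Let L' := standardize S' L.

Lemma inS' y : (y \in S') = (y != x0).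
Proof. by rewrite /S' !inE andbT. Qed.

Lemma L'_le z w : z \in S' -> w \in S' -> (L' z <= L' w) = (L z <= L w).
Proof. exact: st_le. Qed.

Lemma injT : injective L.
Proof. by move=> a b E; apply: lab.1; rewrite ?inE. Qed.

Lemma succ_some y z : succ [set: T] L y = Some z -> z != x0 -> succ S' L' y = Some z.
Proof.
rewrite {1}/succ; case: pickP => // z1 /andP[_ /andP[yz /forallP H]] [E] zx.
subst z1.
have zS : z \in S' by rewrite inS'.
rewrite /succ; case: pickP => [z' /andP[z'S /andP[yz' /forallP H']]|N].
  congr Some; apply: injT; apply/eqP; rewrite eqn_leq.
  have := H' z; rewrite zS yz /= L'_le // => ->.
  by have := H z'; rewrite inE yz' /=.
have := N z; rewrite zS yz /=; move/negP; case; apply/forallP => w.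
apply/implyP => wS; apply/implyP => yw.
rewrite L'_le //; have := H w; by rewrite inE yw.
Qed.

Lemma succ_none y : succ [set: T] L y = None -> succ S' L' y = None.
Proof.
rewrite {1}/succ; case: pickP => // N _.
rewrite /succ; case: pickP => // z' /andP[z'S /andP[yz' _]].
case: (arg_minnP L (yz' : (fun w => (y < w)%O) z')) => m ym Hm.
have := N m; rewrite inE ym /=; move/negP; case.
apply/forallP => w; apply/implyP => _; apply/implyP; exact: Hm.
Qed.

Lemma chain_transfer k y : x0 \notin chain_from [set: T] L k y ->
  chain_from S' L' k y = chain_from [set: T] L k y.
Proof.
elim: k y => [|k IH] y //=.
rewrite inE negb_or => /andP[_].
case E: (succ [set: T] L y) => [z|]; last by rewrite (succ_none E).
move=> H.
have zx : z != x0.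
  by apply/negP => /eqP zE; move: H; rewrite chain_fromE inE zE eqxx.
by rewrite (succ_some E zx) IH.
Qed.

Lemma chain_eq : x0 \notin promo_chain [set: T] L ->
  promo_chain S' L' = promo_chain [set: T] L.
Proof.
move=> Hx.
have x0T : x0 \in [set: T] by rewrite inE.
have [v _ [Lv [s cE]]] := promo_chain_head lab x0T.
have vx : v != x0 by apply/negP => /eqP E; move: Hx; rewrite cE inE E eqxx.
have vS : v \in S' by rewrite inS'.
have cT : promo_chain [set: T] L = chain_from [set: T] L #|[set: T]| v.
  rewrite /promo_chain; case: pickP => [v' /andP[_ /eqP Lv']|N].
    by rewrite (injT (etrans Lv' (esym Lv))).
  by move: (N v); rewrite inE Lv.
have L'v : L' v = 1.
  rewrite /L' /standardize; apply/eqP; rewrite eqSS cards_eq0; apply/eqP.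
  apply/setP => y; rewrite !inE; apply/negbTE; rewrite negb_and; apply/orP; right.
  by rewrite Lv -leqNgt; have /andP[] := lab.2 y (in_setT y).
have cS : promo_chain S' L' = chain_from S' L' #|S'| v.
  rewrite /promo_chain; case: pickP => [v' /andP[v'S /eqP Lv']|N].
    congr chain_from; apply: injT; apply/eqP; rewrite eqn_leq -!L'_le //.
    by rewrite Lv' L'v.
  by move: (N v); rewrite vS L'v.
rewrite cS cT -(chain_stable (chain_size L' #|S'| vS) (subset_leq_card (subsetT S'))).
by apply: chain_transfer; rewrite -cT.
Qed.

Lemma L'_lab : is_labeling S' L'.
Proof. by apply: st_labeling_of => a b _ _; apply: injT. Qed.

Lemma step : x0 \notin promo_chain [set: T] L ->
  {in S', standardize S' (promotion [set: T] L) =1 promotion S' L'}.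
Proof.
move=> Hx y yS.
have Eq : {in S' &, forall a b, (promotion [set: T] L a < promotion [set: T] L b)
     = (promotion S' L' a < promotion S' L' b)}.
  move=> a b aS bS; rewrite !promotionE /src chain_eq //.
  have Hsrc : forall a, a \in S' -> match src [set: T] L a with
              Some z => z \in S' | None => true end.
    move=> a' a'S; case E: (src [set: T] L a') => [z|] //.
    case: (src_mem E) => [->//|zc]; rewrite inS'; apply/negP => /eqP zE.
    by move: Hx; rewrite -zE zc.
  have := Hsrc a aS; have := Hsrc b bS; rewrite /src.
  case: (if _ then _ else _) => [z1|]; case: (if _ then _ else _) => [z2|] //.
  - move=> z1S z2S.
    have [/andP[h1 _] /andP[h2 _]] := (lab.2 z1 (in_setT _), lab.2 z2 (in_setT _)).
    have [/andP[h3 _] /andP[h4 _]] := (L'_lab.2 z1 z1S, L'_lab.2 z2 z2S).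
    have := st_lt L z2S z1S; rewrite -/L'. lia.
  - move=> z1S _.
    have /andP[h1 h2] := lab.2 z1 (in_setT _).
    have /andP[h3 h4] := L'_lab.2 z1 z1S. lia.
  - move=> _ z2S.
    have /andP[h1 h2] := lab.2 z2 (in_setT _).
    have /andP[h3 h4] := L'_lab.2 z2 z2S. lia.
  - by rewrite !ltnn.
rewrite (st_equiv Eq yS) st_labeling //; apply: promo_labeling; exact: L'_lab.
Qed.

End Gen4.
Local Open Scope order_scope.

Theorem mainTheorem10 (disp : Order.disp_t) (P : finPOrderType disp)
  (L : P -> nat) (x0 : P) (gamma : nat) :
  is_labeling [set: P] L ->
  (forall alpha, (alpha < gamma)%N ->
     x0 \notin promo_chain [set: P] (iter alpha (promotion [set: P]) L)) ->
  {in [set: P] :\ x0,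
    standardize ([set: P] :\ x0) (iter gamma (promotion [set: P]) L)
    =1 iter gamma (promotion ([set: P] :\ x0))
                  (standardize ([set: P] :\ x0) L)}.
Proof.
move=> lab Hc.
have labk : forall k, is_labeling [set: P] (iter k (promotion [set: P]) L).
  by elim=> //= k IH; apply: promo_labeling.
suff H : forall k, (k <= gamma)%N ->
  {in [set: P] :\ x0,
    standardize ([set: P] :\ x0) (iter k (promotion [set: P]) L)
    =1 iter k (promotion ([set: P] :\ x0)) (standardize ([set: P] :\ x0) L)}.
  exact: H.
elim=> [|k IH] kg y yS //=.
rewrite (step (labk k) (Hc k kg) yS).
exact: (promotion_congr (IH (ltnW kg)) yS).
Qed.
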